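(* Let $n\geq 2$, $G=\mathbb{Z}_n\times\mathbb{Z}_n$, and $\beta$ a bicharacter of $G$. Let $A$ be a $G$-graded $\beta$-commutative algebra with $A_0=K$ such that, for an enumeration $g_1,\dots,g_k$ of the nonzero elements of $G$, there exist $a_j\in A_{g_j}$ with $a_1\cdots a_k\neq0$. Then $A$ is isomorphic, as a $G$-graded algebra, to a twisted group algebra $K^\alpha G$.
   Context: All algebras are associative with unit over an algebraically closed field $K$ of characteristic $0$. A bicharacter of an abelian group $G$ is a map $\beta\colon G\times G\to K^*$ with $\beta(g,h)=\beta(h,g)^{-1}$, multiplicative in each argument. A $G$-graded algebra $C$ is $\beta$-commutative if $c_gc_h=\beta(g,h)c_hc_g$ for all homogeneous $c_g\in C_g$, $c_h\in C_h$. For a 2-cocycle $\alpha\colon G\times G\to K^*$, the twisted group algebra $K^\alpha G$ has basis $\{X_g\}_{g\in G}$ with $X_gX_h=\alpha(g,h)X_{g+h}$ and grading $(K^\alpha G)_g=KX_g$. *)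

(* Defs.v *)
From HB Require Import structures.
From mathcomp Require Import all_boot all_order all_algebra.
Set Implicit Arguments. Unset Strict Implicit. Unset Printing Implicit Defensive.
Import GRing.Theory.
Local Open Scope ring_scope.

Section Defs.
Variables (K : fieldType) (G : finZmodType).

(** comp g is the homogeneous component A_g; A = (+)_g A_g and A_g A_h <= A_(g+h). *)
Definition graded_algebra (A : algType K) (comp : G -> {pred A}) : Prop :=
  [/\ (forall g, 0 \in comp g /\
         (forall (c : K) (x y : A), x \in comp g -> y \in comp g -> c *: x + y \in comp g)),
      (forall a : A, exists x : G -> A, (forall g, x g \in comp g) /\ a = \sum_(g : G) x g),
      (forall x : G -> A, (forall g, x g \in comp g) -> \sum_(g : G) x g = 0 ->
          forall g, x g = 0) &
      (forall g h (x y : A), x \in comp g -> y \in comp h -> x * y \in comp (g + h))].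

Definition bicharacter (beta : G -> G -> K) : Prop :=
  [/\ forall g h, beta g h != 0,
      forall g h, beta g h = (beta h g)^-1,
      forall g g' h, beta (g + g') h = beta g h * beta g' h &
      forall g h h', beta g (h + h') = beta g h * beta g h'].

Definition beta_commutative (A : algType K) (comp : G -> {pred A}) (beta : G -> G -> K) :=
  forall g h (x y : A), x \in comp g -> y \in comp h -> x * y = beta g h *: (y * x).

Definition cocycle (alpha : G -> G -> K) : Prop :=
  (forall g h, alpha g h != 0) /\
  (forall g h k, alpha g h * alpha (g + h) k = alpha h k * alpha g (h + k)).

(** Twisted group algebra K^alpha G: underlying space {ffun G -> K},
    basis X_g = indicator of g, the product is
    the bilinear extension of X_g X_h = alpha g h X_(g+h). *)
Definition tw_mul (alpha : G -> G -> K) (x y : {ffun G -> K}) : {ffun G -> K} :=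
  [ffun k => \sum_(g : G) \sum_(h : G)
               (if g + h == k then alpha g h * x g * y h else 0)].

Definition tw_one (alpha : G -> G -> K) : {ffun G -> K} :=
  [ffun k => if k == 0 then (alpha 0 0)^-1 else 0].

Definition tw_lin (c : K) (x y : {ffun G -> K}) : {ffun G -> K} :=
  [ffun k => c * x k + y k].

Definition tw_comp (g : G) : {pred {ffun G -> K}} :=
  fun x => [forall h, (h != g) ==> (x h == 0)].

Definition graded_iso (alpha : G -> G -> K) (A : algType K) (comp : G -> {pred A})
    (f : {ffun G -> K} -> A) : Prop :=
  [/\ forall (c : K) x y, f (tw_lin c x y) = c *: f x + f y,
      bijective f,
      forall x y, f (tw_mul alpha x y) = f x * f y,
      f (tw_one alpha) = 1 &
      forall g, (forall x, x \in tw_comp g -> f x \in comp g) /\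
                (forall a, a \in comp g -> exists2 x, x \in tw_comp g & f x = a)].

End Defs.

Definition ZnZn (n : nat) : Type := ('Z_n * 'Z_n)%type.
HB.instance Definition _ n := GRing.Zmodule.on (ZnZn n).
HB.instance Definition _ n := Finite.on (ZnZn n).

(* Main.v *)
Require Import Defs.
From HB Require Import structures.
From mathcomp Require Import all_boot all_order all_algebra.
Import GRing.Theory.
Local Open Scope ring_scope.

Lemma scalerI (K : fieldType) (A : lmodType K) (c d : K) (x : A) :
  x != 0 -> c *: x = d *: x -> c = d.
Proof.
move=> nx E; apply/eqP; rewrite -subr_eq0.
have : (c - d) *: x == 0 by rewrite scalerBl E subrr.
by rewrite scaler_eq0 (negbTE nx) orbF.
Qed.

Lemma two_sided (K : fieldType) (A : algType K) (x u : A) (c1 c2 : K) :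
  c1 != 0 -> x * u = c1%:A -> u * x = c2%:A ->
  x * (c1^-1 *: u) = 1 /\ (c1^-1 *: u) * x = 1.
Proof.
move=> nc1 E1 E2.
have nu : u != 0.
  apply/eqP => u0; move: E1; rewrite u0 mulr0 => /esym/eqP.
  by rewrite scaler_eq0 oner_eq0 orbF (negbTE nc1).
have e : c1 = c2.
  apply: (@scalerI K A c1 c2 u nu); rewrite -mulr_algr -E1 mulrA E2 mulr_algl //.
rewrite -scalerAr E1 -scalerAl E2 -e scalerA mulVf // scale1r; split=> //.
Qed.

Lemma comp_scale {K : fieldType} {G : finZmodType} {A : algType K} {comp : G -> {pred A}} :
  graded_algebra comp -> forall g (c : K) x, x \in comp g -> c *: x \in comp g.
Proof.
case=> H1 _ _ _ g c x hx.
have [h0 hl] := H1 g.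
by rewrite -[c *: x]addr0; apply: hl.
Qed.

Lemma prod_hom {K : fieldType} {G : finZmodType} {A : algType K} {comp : G -> {pred A}}
  {a : G -> A} : graded_algebra comp ->
  (forall x : A, x \in comp 0 <-> exists c : K, x = c%:A) ->
  (forall g, a g \in comp g) ->
  forall r : seq G, \prod_(h <- r) a h \in comp (\sum_(h <- r) h).
Proof.
move=> Hg A0 ha; elim=> [|h r IH].
  rewrite !big_nil; apply/A0; exists 1; by rewrite scale1r.
rewrite !big_cons; case: Hg => _ _ _ H4; exact: H4.
Qed.

Lemma build (K : fieldType) (G : finZmodType) (A : algType K) (comp : G -> {pred A})
  (beta : G -> G -> K) (a : G -> A) (s : seq G) :
  graded_algebra comp -> bicharacter beta -> beta_commutative comp beta ->
  (forall x : A, x \in comp 0 <-> exists c : K, x = c%:A) ->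
  (forall g, (g \in s) = (g != 0)) ->
  (forall g, a g \in comp g) -> \prod_(g <- s) a g != 0 ->
  \sum_(h <- s) h = 0 ->
  forall g, exists2 v, v \in comp (- g) &
    ((if g == 0 then 1 else a g) * v = 1 /\ v * (if g == 0 then 1 else a g) = 1).
Proof.
move=> Hg [hb _ _ _] Hc A0 Hs ha hP hD g.
have sc := comp_scale Hg.
case: eqP => [->|/eqP g0].
  exists 1; last by rewrite mulr1.
  rewrite oppr0; apply/A0; exists 1; by rewrite scale1r.
have [c Pc] : exists c, \prod_(h <- s) a h = c%:A.
  by apply/A0; rewrite -hD; apply: prod_hom.
have c0 : c != 0 by apply: contraNneq hP => c0; rewrite Pc c0 scale0r.
have gs : g \in s by rewrite Hs.
move: Pc hD; case/splitPr: gs => s1 s2 Pc hD.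
rewrite big_cat big_cons /= in Pc.
rewrite big_cat big_cons /= in hD.
have hX := prod_hom Hg A0 ha s1.
have hY := prod_hom Hg A0 ha s2.
set X := \prod_(h <- s1) a h in Pc hX.
set Y := \prod_(h <- s2) a h in Pc hY.
set dX := \sum_(h <- s1) h in hD hX.
set dY := \sum_(h <- s2) h in hD hY.
case: Hg => H1 H2 H3 H4.
have hu : Y * X \in comp (- g).
  have -> : - g = dY + dX.
    apply: (addrI g); rewrite addrN -hD addrCA; congr (_ + _); exact: addrC.
  exact: H4.
have E1 : a g * (Y * X) = (c / beta dX (g + dY))%:A.
  have := Pc; rewrite (Hc _ _ _ _ hX (H4 _ _ _ _ (ha g) hY)) => /(congr1 (fun z => (beta dX (g + dY))^-1 *: z)).
  rewrite scalerA mulVf // scale1r mulrA => ->.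
  by rewrite scalerA mulrC.
have E2 : (Y * X) * a g = (c / beta (dX + g) dY)%:A.
  have := Pc; rewrite mulrA (Hc _ _ _ _ (H4 _ _ _ _ hX (ha g)) hY) => /(congr1 (fun z => (beta (dX + g) dY)^-1 *: z)).
  rewrite scalerA mulVf // scale1r mulrA => ->.
  by rewrite scalerA mulrC.
have nc1 : c / beta dX (g + dY) != 0 by rewrite mulf_neq0 ?invr_eq0.
have [e1 e2] := @two_sided K A _ _ _ _ nc1 E1 E2.
exists ((c / beta dX (g + dY))^-1 *: (Y * X)); first exact: sc.
by [].
Qed.

Lemma main_gen (K : fieldType) (G : finZmodType) (A : algType K) (comp : G -> {pred A})
  (b : G -> A) : graded_algebra comp ->
  (forall x : A, x \in comp 0 <-> exists c : K, x = c%:A) ->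
  (forall g, b g \in comp g) -> b 0 = 1 ->
  (forall g, exists2 v, v \in comp (- g) & (b g * v = 1 /\ v * b g = 1)) ->
  exists alpha : G -> G -> K,
    cocycle alpha /\ exists f : {ffun G -> K} -> A, graded_iso alpha comp f.
Proof.
move=> Hg A0 hb b0 hv.
have sc := comp_scale Hg.
case: (Hg) => H1 H2 H3 H4.
have F1 : forall g x, x \in comp g -> exists c, x == c *: b g.
  move=> g x hx; have [v hvc [e1 e2]] := hv g.
  have /A0 [c Ec] : x * v \in comp 0 by rewrite -(addrN g); apply: H4.
  exists c; apply/eqP.
  by rewrite -[x]mulr1 -e2 mulrA Ec mulr_algl.
have F2 : forall g, b g != 0.
  move=> g; have [v _ [e1 _]] := hv g; apply/eqP => e.
  by move: e1; rewrite e mul0r => /eqP; rewrite eq_sym oner_eq0.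
have F3 : forall g h, exists c, b g * b h == c *: b (g + h).
  by move=> g h; apply: F1; apply: H4.
pose alpha g h := xchoose (F3 g h).
have Ha : forall g h, b g * b h = alpha g h *: b (g + h).
  by move=> g h; apply/eqP; exact: (xchooseP (F3 g h)).
have a00 : alpha 0 0 = 1.
  have e := Ha 0 0; rewrite addr0 b0 mulr1 in e.
  by apply: (@scalerI K A _ _ 1 (oner_neq0 _)); rewrite -e scale1r.
exists alpha; split.
  split.
    move=> g h; apply/eqP => e.
    have [v _ [e1 _]] := hv h.
    have := F2 g; rewrite -[b g]mulr1 -e1 mulrA Ha e scale0r mul0r eqxx //.
  move=> g h k.
  apply: (@scalerI K A _ _ (b (g + h + k)) (F2 _)).
  rewrite -!scalerA -Ha scalerAl -Ha.
  rewrite -addrA -Ha scalerAr -Ha mulrA //.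
pose f (x : {ffun G -> K}) := \sum_(g : G) x g *: b g.
have flin : forall c x y, f (tw_lin c x y) = c *: f x + f y.
  move=> c x y; rewrite /f scaler_sumr -big_split; apply: eq_bigr => g _.
  by rewrite ffunE scalerDl scalerA.
have finj : injective f.
  move=> x y E; apply/ffunP => g; apply/eqP; rewrite -subr_eq0.
  have := H3 (fun g => (x g - y g) *: b g).
  move=> /(_ (fun g => sc _ _ _ (hb g))).
  rewrite (eq_bigr (fun g => x g *: b g - y g *: b g)); last by move=> h _; rewrite scalerBl.
  rewrite sumrB -/(f x) -/(f y) E subrr => /(_ erefl g) /eqP.
  by rewrite scaler_eq0 (negbTE (F2 g)) orbF.
have fsurj : forall a : A, exists x, f x == a.
  move=> a; have [y [hy ->]] := H2 a.
  exists [ffun g => xchoose (F1 g (y g) (hy g))]; apply/eqP.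
  rewrite /f; apply: eq_bigr => g _; rewrite ffunE.
  by apply/esym/eqP; exact: (xchooseP (F1 g (y g) (hy g))).
have fone : forall g x, x \in tw_comp g -> f x = x g *: b g.
  move=> g x hx; rewrite /f (bigD1 g) //= big1 ?addr0 // => h hg.
  move: hx; rewrite /in_mem /= => /forallP /(_ h); rewrite hg /= => /eqP ->.
  by rewrite scale0r.
exists f; split.
- exact: flin.
- exists (fun a => xchoose (fsurj a)).
    by move=> x; apply: finj; apply/eqP; exact: (xchooseP (fsurj (f x))).
  by move=> a; apply/eqP; exact: (xchooseP (fsurj a)).
- move=> x y.
  rewrite /f mulr_suml.
  under eq_bigr => k _ do rewrite ffunE scaler_suml.
  under eq_bigr => k _ do under eq_bigr => g _ do rewrite scaler_suml.
  rewrite exchange_big /=; apply: eq_bigr => g _.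
  rewrite exchange_big /= mulr_sumr; apply: eq_bigr => h _.
  rewrite (eq_bigr (fun k => if k == g + h then (alpha g h * x g * y h) *: b k else 0)); last first.
    by move=> k _; rewrite eq_sym; case: eqP => // _; rewrite scale0r.
  rewrite -big_mkcond big_pred1_eq.
  rewrite -scalerAl -scalerAr scalerA Ha scalerA.
  by congr (_ *: _); rewrite [RHS]mulrC mulrA.
- rewrite /f (bigD1 0) //= big1 ?addr0.
    by rewrite ffunE eqxx a00 invr1 scale1r b0.
  by move=> h /negbTE hh; rewrite ffunE hh scale0r.
- move=> g; split.
    by move=> x hx; rewrite (fone g) //; apply: sc.
  move=> a /(F1 g) [c /eqP ->].
  exists [ffun h => if h == g then c else 0].
    rewrite /in_mem /=; apply/forallP => h; apply/implyP => hg.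
    by rewrite ffunE (negbTE hg).
  by rewrite (fone g) ?ffunE ?eqxx // /in_mem /=; apply/forallP => h; apply/implyP => hg; rewrite ffunE (negbTE hg).
Qed.
Lemma sumZnZn_comp (n : nat) (I : finType) (F : I -> ZnZn n) : \sum_i F i = (\sum_i (F i).1, \sum_i (F i).2).
Proof. by elim/big_rec3: _ => // i y1 y2 y3 _ ->. Qed.

Lemma sumZnZn (n : nat) (hn : (2 <= n)%N) : \sum_(g : ZnZn n) g = 0.
Proof.
have -> := sumZnZn_comp n _ (fun g : ZnZn n => g).
have Z : forall i : 'Z_n, \sum_(j : 'Z_n) i = 0.
  by move=> i; rewrite sumr_const card_ord Zp_cast // -mulr_natr pchar_Zp // mulr0.
have P1 : \sum_(p : ZnZn n) p.1 = \sum_(i : 'Z_n) \sum_(j : 'Z_n) i :> 'Z_n.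
  by rewrite pair_big.
have P2 : \sum_(p : ZnZn n) p.2 = \sum_(i : 'Z_n) \sum_(j : 'Z_n) j :> 'Z_n.
  by rewrite pair_big.
have S0 : \sum_(i : 'Z_n) \sum_(j : 'Z_n) i = 0 by rewrite big1 // => i _; apply: Z.
rewrite P1 P2 S0 exchange_big /= S0 //.
Qed.

Theorem corollary4p3 (K : closedFieldType) (hK : [pchar K] =i pred0)
  (n : nat) (hn : (2 <= n)%N)
  (A : algType K) (comp : (ZnZn n) -> {pred A})
  (beta : (ZnZn n) -> (ZnZn n) -> K) :
  graded_algebra comp ->
  bicharacter beta ->
  beta_commutative comp beta ->
  (forall x : A, x \in comp 0 <-> exists c : K, x = c%:A) ->
  (exists s : seq (ZnZn n),
      [/\ uniq s, (forall g, (g \in s) = (g != 0)) &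
          exists a : (ZnZn n) -> A,
            (forall g, a g \in comp g) /\ \prod_(g <- s) a g != 0]) ->
  exists alpha : (ZnZn n) -> (ZnZn n) -> K,
    cocycle alpha /\ exists f : {ffun (ZnZn n) -> K} -> A, graded_iso alpha comp f.
Proof.
move=> Hg Hb Hc A0 [s [us Hs [a [ha hP]]]].
have hD : \sum_(h <- s) h = 0.
  rewrite big_uniq // (eq_bigl (fun h => h != 0)); last by move=> h; rewrite /= Hs.
  by have := sumZnZn n hn; rewrite (bigD1 0) //= add0r.
have hv := @build K _ A comp beta a s Hg Hb Hc A0 Hs ha hP hD.
apply: (@main_gen K _ A comp (fun g => if g == 0 then 1 else a g) Hg A0) => //.
move=> g; case: eqP => [->|_] //; apply/A0; exists 1; by rewrite scale1r.
Qed.
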